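(* Let $g:\mathbb{Z}_{\ge0}\to\mathbb{R}$ satisfy $g(0)>0$ and $g(k)\le 0$ for all $k\ge1$ (an opponent process with $\tau_0=1$). Let $y_{\min}\in\mathbb{R}$, let gains satisfy $0<K_+\le g(0)^{-1}\le K_-$, and let $\delta>0$. Let $(y^{\mathrm{nat}}_t)_{t\ge0}$ be a real sequence and $u_0\ge0$ an initial dose such that $y_1:=g(0)u_0+y^{\mathrm{nat}}_1\ge y_{\min}$, and suppose $$y^{\mathrm{nat}}_{t+1}\ge y^{\mathrm{nat}}_t-g(t)\,u_0+\frac{\delta}{t}\qquad\text{for all }t\ge1.$$ For $t\ge1$ define $$u_t=\max\bigl\{0,\ u_{t-1}-K_+(y_t-y_{\min})_+-K_-(y_t-y_{\min})_-\bigr\},\qquad y_{t+1}=\sum_{k=0}^{t}g(k)\,u_{t-k}+y^{\mathrm{nat}}_{t+1},$$ where $(x)_+=\max(x,0)$, $(x)_-=\min(x,0)$. Then: (i) $u_t\le u_{t-1}$ for all $t\ge1$; (ii) $y_t\ge y_{\min}$ for all $t\ge1$; (iii) there exists a finite $T_0$ such that $u_t=0$ for all $t\ge T_0$.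
   Context: An opponent process with switching time $\tau_0=1$ is an impulse response $g$ with $g(0)>0$ and $g(\tau)\le0$ for all $\tau\ge1$. Doses are nonnegative. *)

(* Defs.v *)
From mathcomp Require Import all_boot all_order all_algebra.
From mathcomp Require Import reals.
Set Implicit Arguments. Unset Strict Implicit. Unset Printing Implicit Defensive.
Import Order.TTheory GRing.Theory Num.Theory.
Local Open Scope ring_scope.

Definition pospart {R : realType} (x : R) : R := Num.max x 0.
Definition negpart {R : realType} (x : R) : R := Num.min x 0.

Definition opponent_process {R : realType} (g : nat -> R) : Prop :=
  0 < g 0%N /\ forall k : nat, (1 <= k)%N -> g k <= 0.

(* Main.v *)
Require Import Defs.
From mathcomp Require Import all_boot all_order all_algebra.
From mathcomp Require Import reals ring lra.
Import Order.TTheory GRing.Theory Num.Theory.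
Local Open Scope ring_scope.

Definition Hs {R : realType} (m : nat) : R := \sum_(0 <= k < m) (k.+1%:R)^-1.

Lemma Hs_ge (R : realType) n : n%:R / 2 <= @Hs R (2 ^ n).
Proof.
elim: n => [|n IH]; first by rewrite mul0r /Hs expn0 big_nat1; lra.
rewrite /Hs (@big_cat_nat _ _ _ (2 ^ n)) //=; last by rewrite expnS leq_pmull.
have H2 : (1/2 : R) <= \sum_(2 ^ n <= i < 2 ^ n.+1) (i.+1%:R)^-1.
  apply: (@le_trans _ _ (\sum_(2 ^ n <= i < 2 ^ n.+1) ((2 ^ n.+1)%:R)^-1)).
    rewrite sumr_const_nat.
    have -> : (2 ^ n.+1 - 2 ^ n = 2 ^ n)%N by rewrite expnS mul2n -addnn addnK.
    have hp : (0 : R) < (2 ^ n)%:R by rewrite ltr0n expn_gt0.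
    have E : ((2 ^ n.+1)%:R^-1 : R) *+ (2 ^ n) = (2 ^ n)%:R / (2 ^ n.+1)%:R.
      by rewrite mulrC mulr_natr.
    rewrite E expnS natrM.
    have -> : (2 ^ n)%:R / (2%:R * (2 ^ n)%:R) = (1/2 : R).
      by field; rewrite gt_eqF.
    lra.
  rewrite big_nat_cond [X in _ <= X]big_nat_cond; apply: ler_sum => i /andP[/andP[_ hi] _].
  by rewrite lef_pV2 ?posrE ?ltr0n ?expn_gt0 // ler_nat.
rewrite -/(@Hs R (2 ^ n)) -natr1; lra.
Qed.

Theorem proposition2 (R : realType) (g : nat -> R) (ymin Kp Km delta : R)
    (ynat u y : nat -> R) :
  opponent_process g ->
  0 < Kp -> Kp <= (g 0%N)^-1 -> (g 0%N)^-1 <= Km ->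
  0 < delta ->
  0 <= u 0%N ->
  ymin <= g 0%N * u 0%N + ynat 1%N ->
  (forall t : nat, (1 <= t)%N ->
     ynat t - g t * u 0%N + delta / t%:R <= ynat t.+1) ->
  (forall t : nat, (1 <= t)%N ->
     u t = Num.max 0 (u t.-1 - Kp * pospart (y t - ymin)
                              - Km * negpart (y t - ymin))) ->
  (forall t : nat,
     y t.+1 = \sum_(0 <= k < t.+1) g k * u (t - k)%N + ynat t.+1) ->
  (forall t : nat, (1 <= t)%N -> u t <= u t.-1) /\
  (forall t : nat, (1 <= t)%N -> ymin <= y t) /\
  (exists T0 : nat, forall t : nat, (T0 <= t)%N -> u t = 0).
Proof.
move=> [g0 gneg] Kp0 Kpl Kml d0 u00 y1 hnat hu hy.
have g0Kp : g 0%N * Kp <= 1.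
  by rewrite -(mulfV (lt0r_neq0 g0)) ler_pM2l.
have unn : forall t, 0 <= u t.
  by case=> [//|t]; rewrite hu // le_max lexx.
have hpos : forall t, (1 <= t)%N -> ymin <= y t ->
    u t = Num.max 0 (u t.-1 - Kp * (y t - ymin)).
  move=> t t1 yt; rewrite hu // /pospart /negpart (@max_l _ _ (y t - ymin) 0) ?subr_ge0 //.
  by rewrite (@min_r _ _ (y t - ymin) 0) ?subr_ge0 // mulr0 subr0.
have D : forall s, (forall j, (1 <= j <= s)%N -> u j <= u j.-1) ->
    y s.+1 + g 0%N * (u s.+1 - u s) + delta / s.+1%:R <= y s.+2.
  move=> s Hm; rewrite !hy.
  have e2 : \sum_(0 <= k < s.+2) g k * u (s.+1 - k)%N =
      g 0%N * u s.+1 + g s.+1 * u 0%N + \sum_(0 <= k < s) g k.+1 * u (s - k)%N.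
    rewrite big_nat_recl // big_nat_recr //= subn0 subnn.
    under eq_bigr do rewrite subSS.
    by rewrite addrA [X in _ = X]addrAC.
  have e1 : \sum_(0 <= k < s.+1) g k * u (s - k)%N =
      g 0%N * u s + \sum_(0 <= k < s) g k.+1 * u (s - k.+1)%N.
    by rewrite big_nat_recl // subn0.
  have hs : 0 <= \sum_(0 <= k < s) g k.+1 * u (s - k)%N
               - \sum_(0 <= k < s) g k.+1 * u (s - k.+1)%N.
    rewrite -sumrB big_nat_cond; apply: sumr_ge0 => k /andP[/andP[_ hk] _].
    rewrite -mulrBr; apply: mulr_le0; first exact: gneg.
    rewrite subr_le0 subnS; apply: Hm.
    by rewrite subn_gt0 hk leq_subr.
  have hn := hnat s.+1 isT.
  rewrite e1 e2.
  set A := \sum_(0 <= k < s) g k.+1 * u (s - k)%N in hs *.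
  set B := \sum_(0 <= k < s) g k.+1 * u (s - k.+1)%N in hs *.
  rewrite mulrBr.
  set a := g 0%N * u s.+1 in hs *. set b := g 0%N * u s.
  set c := g s.+1 * u 0%N in hn *. set d := delta / s.+1%:R in hn *.
  lra.
have M : forall n, (forall j, (1 <= j <= n)%N -> u j <= u j.-1) /\
    (forall j, (1 <= j <= n.+1)%N -> ymin <= y j) /\
    (forall j, (2 <= j <= n.+1)%N -> ymin + delta / (j.-1)%:R <= y j).
  elim=> [|n [IA [IB IC]]].
    split; first by move=> j /andP[a b]; move: (leq_trans a b).
    split; last by move=> j /andP[a b]; move: (leq_trans a b).
    move=> j /andP[a b]; have -> : j = 1%N by apply/eqP; rewrite eqn_leq a b.
    by rewrite hy big_nat1 subnn.
  have yn1 : ymin <= y n.+1 by apply: IB; rewrite leqnn.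
  have hun := hpos n.+1 isT yn1.
  have e0 : 0 <= Kp * (y n.+1 - ymin) by rewrite mulr_ge0 ?subr_ge0 // ltW.
  have mono' : u n.+1 <= u n.
    by rewrite hun ge_max unn /=; lra.
  have lo : u n - Kp * (y n.+1 - ymin) <= u n.+1 by rewrite hun le_max lexx orbT.
  have Dn := D n IA.
  have k1 : - (g 0%N * Kp) * (y n.+1 - ymin) <= g 0%N * (u n.+1 - u n).
    rewrite mulNr -mulrA -mulrN ler_pM2l //; lra.
  have k2 : (g 0%N * Kp) * (y n.+1 - ymin) <= y n.+1 - ymin.
    by rewrite ler_piMl // subr_ge0.
  have dpos : 0 < delta / n.+1%:R by rewrite divr_gt0 // ltr0n.
  have key : ymin + delta / n.+1%:R <= y n.+2.
    move: k1 k2 Dn; rewrite mulNr; set P := (g 0%N * Kp) * (y n.+1 - ymin).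
    set Q := g 0%N * (u n.+1 - u n). set d := delta / n.+1%:R. clearbody P Q d. lra.
  split.
    move=> j /andP[a b]; case: (ltngtP j n.+1) b => // [jl _|-> _]; last exact: mono'.
    by apply: IA; rewrite a.
  split.
    move=> j /andP[a b]; case: (ltngtP j n.+2) b => // [jl _|-> _]; last by apply: le_trans key; rewrite lerDl ltW.
    by apply: IB; rewrite a.
  move=> j /andP[a b]; case: (ltngtP j n.+2) b => // [jl _|-> _]; last exact: key.
  by apply: IC; rewrite a.
have mono : forall t, (1 <= t)%N -> u t <= u t.-1.
  by move=> t t1; case: (M t) => + _; apply; rewrite t1 leqnn.
have ylow : forall t, (1 <= t)%N -> ymin <= y t.
  by move=> t t1; case: (M t) => _ [+ _]; apply; rewrite t1 leqW.
have ylow2 : forall s, ymin + delta / s.+1%:R <= y s.+2.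
  by move=> s; case: (M s.+1) => _ [_ H]; apply: (H s.+2); rewrite leqnn.
have chain : forall s t, (t <= s)%N -> u s <= u t.
  elim=> [|s IH] t; first by rewrite leqn0 => /eqP ->.
  rewrite leq_eqVlt => /orP[/eqP -> //|ts].
  exact: le_trans (mono s.+1 isT) (IH t ts).
split; first exact: mono.
split; first exact: ylow.
have Kd : 0 < Kp * delta by rewrite mulr_gt0.
set c := u 0%N / (Kp * delta).
have c0 : 0 <= c by rewrite divr_ge0 // ltW.
set N := Num.Def.archi_bound (2 * c).
have hN : 2 * c < N%:R by apply: archi_boundP; rewrite mulr_ge0.
have hH := Hs_ge R N.
exists (2 ^ N).+1 => t tT.
suff uT : u (2 ^ N).+1 = 0.
  by apply/eqP; rewrite eq_le unn andbT -uT chain.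
case: (eqVneq (u (2 ^ N).+1) 0) => // nz.
have uTp : 0 < u (2 ^ N).+1 by rewrite lt_neqAle eq_sym nz unn.
have upos : forall t, (t <= (2 ^ N).+1)%N -> 0 < u t.
  by move=> t' h; apply: lt_le_trans uTp (chain _ _ h).
have lin : forall t, (1 <= t <= (2 ^ N).+1)%N ->
    u t = u t.-1 - Kp * (y t - ymin).
  move=> t' /andP[a b]; have := upos t' b.
  rewrite (hpos t' a (ylow t' a)).
  case: (leP 0 (u t'.-1 - Kp * (y t' - ymin))) => [h _|h]; first by [].
  by rewrite ltxx.
have S : forall t, (t <= (2 ^ N).+1)%N ->
    Kp * delta * @Hs R t.-1 <= u 0%N - u t.
  clear tT t; elim=> [|t IH] ht.
    by rewrite /Hs big_geq // mulr0 subrr.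
  have IH' := IH (ltnW ht).
  rewrite (lin t.+1) ?ht //.
  case: t ht IH IH' => [|s] ht _ IH'.
    rewrite /Hs big_geq // mulr0 /=.
    have := ylow 1%N isT; move: (unn 0%N) => _ h1.
    have : 0 <= Kp * (y 1%N - ymin) by rewrite mulr_ge0 ?subr_ge0 // ltW.
    lra.
  rewrite /= /Hs big_nat_recr //= -/(@Hs R s) mulrDr.
  have := ylow2 s => hy2.
  have k : Kp * delta * s.+1%:R^-1 <= Kp * (y s.+2 - ymin).
    rewrite -mulrA ler_pM2l //; move: hy2; set d := delta / _; clearbody d; lra.
  move: IH' k; rewrite /=.
  set A := Kp * delta * Hs s. set B := Kp * delta * s.+1%:R^-1.
  set C := Kp * (y s.+2 - ymin). clearbody A B C. lra.
have := S _ (leqnn _); rewrite /= => hS.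
have : c < @Hs R (2 ^ N) by lra.
rewrite ltr_pdivrMr // => hc.
move: hS hc uTp; rewrite [Hs _ * _]mulrC.
set A := Kp * delta * Hs (2 ^ N). clearbody A. lra.
Qed.
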